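(* Let $(K,\nu)$ be a valued field with $\nu$ a rank-one discrete valuation normalized so that $\nu(K^* )=\mathbb{Z}$, with valuation ring $R_\nu$ and uniformizer $\pi$. Let $f(x)=x^n+a\in R_\nu[x]$ with $\nu(a)=m\ge1$ and $\gcd(m,n)=1$. Let $\alpha$ be a root of $f$, $L=K(\alpha)$, and $S$ the integral closure of $R_\nu$ in $L$. Let $s,t\in\mathbb{Z}$ satisfy $ms-nt=1$ and put $\theta=\alpha^s/\pi^t$. Then $f(x)$ is irreducible over $K$ and $S=R_\nu[\theta]$ (i.e., $\theta$ generates a power basis of $S$ over $R_\nu$). *)

(* Defs.v *)
From HB Require Import structures.
From mathcomp Require Import all_boot all_order all_algebra all_field.
Set Implicit Arguments. Unset Strict Implicit. Unset Printing Implicit Defensive.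
Import Order.TTheory GRing.Theory Num.Theory.
Local Open Scope ring_scope.

(* A (rank-one) discrete valuation on K normalized with v(K^* ) = Z.
   v is a function K -> int; its value at 0 (conventionally +oo) is
   irrelevant and never used. *)
Definition discrete_valuation (K : fieldType) (v : K -> int) : Prop :=
  [/\ (forall x y : K, x != 0 -> y != 0 -> v (x * y) = v x + v y),
      (forall x y : K, x != 0 -> y != 0 -> x + y != 0 ->
          Num.min (v x) (v y) <= v (x + y))
    & (forall z : int, exists x : K, x != 0 /\ v x = z)].

Definition vring (K : fieldType) (v : K -> int) : {pred K} :=
  fun x => (x == 0) || (0 <= v x).

Definition integral_over_vring (K : fieldType) (L : fieldExtType K)
    (v : K -> int) (y : L) : Prop :=
  exists p : {poly K}, [/\ p \is monic, p \is a polyOver (vring v)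
                        & root (map_poly (in_alg L) p) y].

Definition in_vring_adjoin (K : fieldType) (L : fieldExtType K)
    (v : K -> int) (theta y : L) : Prop :=
  exists g : {poly K}, g \is a polyOver (vring v) /\
                       y = (map_poly (in_alg L) g).[theta].

(* Main.v *)
Require Import Defs.
From HB Require Import structures.
From mathcomp Require Import all_boot all_order all_algebra all_field.
From mathcomp Require Import zify ring lra.
Set Implicit Arguments. Unset Strict Implicit. Unset Printing Implicit Defensive.
Import Order.TTheory GRing.Theory Num.Theory.
Local Open Scope ring_scope.

Section Val.
Variables (K : fieldType) (v : K -> int) (hv : discrete_valuation v).

Definition vge (b : int) (x : K) := (x == 0) || (b <= v x).

Lemma vM x y : x != 0 -> y != 0 -> v (x * y) = v x + v y.
Proof. by case: hv => H _ _; apply: H. Qed.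

Lemma vD x y : x != 0 -> y != 0 -> x + y != 0 -> Num.min (v x) (v y) <= v (x + y).
Proof. by case: hv => _ H _; apply: H. Qed.

Lemma v1 : v 1 = 0.
Proof. have H : v 1 = v 1 + v 1 by rewrite -vM ?oner_neq0 // mulr1. lia. Qed.

Lemma vN1 : v (-1) = 0.
Proof.
have h1 : (-1 : K) != 0 by rewrite oppr_eq0 oner_neq0.
have H : v 1 = v (-1) + v (-1) by rewrite -vM // mulrNN mulr1.
rewrite v1 in H; lia.
Qed.

Lemma vN x : v (- x) = v x.
Proof.
have [->|x0] := eqVneq x 0; first by rewrite oppr0.
have h1 : (-1 : K) != 0 by rewrite oppr_eq0 oner_neq0.
by rewrite -mulN1r vM // vN1 add0r.
Qed.

Lemma vV x : x != 0 -> v x^-1 = - v x.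
Proof.
move=> x0; have xi0 : x^-1 != 0 by rewrite invr_eq0.
have H : v 1 = v x + v x^-1 by rewrite -vM // mulfV.
rewrite v1 in H; lia.
Qed.

Lemma vX x k : x != 0 -> v (x ^+ k) = k%:Z * v x.
Proof.
move=> x0; elim: k => [|k IH]; first by rewrite expr0 v1 mul0r.
rewrite exprS vM ?expf_neq0 // IH; lia.
Qed.

Lemma vXz x (z : int) : x != 0 -> v (x ^ z) = z * v x.
Proof.
move=> x0; case: z => k; first by rewrite -exprnP vX.
rewrite NegzE -invr_expz -exprnP vV ?expf_neq0 // vX //; lia.
Qed.

Lemma vgeD b x y : vge b x -> vge b y -> vge b (x + y).
Proof.
rewrite /vge; have [->|x0] := eqVneq x 0; first by move=> _; rewrite add0r.
have [->|y0] := eqVneq y 0; first by move=> /= hx _; rewrite addr0 (negPf x0).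
have [->|s0] := eqVneq (x + y) 0; first by [].
move=> /= hx hy; have := vD x0 y0 s0.
rewrite /Num.min; case: ifP => _ h; exact: le_trans h.
Qed.

Lemma vgeN b x : vge b (- x) = vge b x.
Proof. by rewrite /vge oppr_eq0 vN. Qed.

Lemma vgeB b x y : vge b x -> vge b y -> vge b (x - y).
Proof. by move=> hx hy; apply: vgeD; rewrite // vgeN. Qed.

Lemma vgeM b b' x y : vge b x -> vge b' y -> vge (b + b') (x * y).
Proof.
rewrite /vge; have [->|x0] := eqVneq x 0; first by rewrite mul0r eqxx.
have [->|y0] := eqVneq y 0; first by rewrite mulr0 eqxx.
rewrite /= vM // mulf_eq0 (negPf x0) (negPf y0) /= => hx hy; lia.
Qed.

Lemma vge_le b b' x : b' <= b -> vge b x -> vge b' x.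
Proof. rewrite /vge => h /orP [->//|h2]; apply/orP; right; lia. Qed.

Lemma vge0 b : vge b 0.
Proof. by rewrite /vge eqxx. Qed.

Lemma vge_sum b (I : Type) (r : seq I) (P : pred I) (F : I -> K) :
  (forall i, P i -> vge b (F i)) -> vge b (\sum_(i <- r | P i) F i).
Proof.
move=> h; elim/big_rec: _ => [|i x Pi hx]; first exact: vge0.
exact: vgeD (h i Pi) hx.
Qed.

End Val.

Definition vr (K : fieldType) (v : K -> int) (hv : discrete_valuation v) : {pred K} := vring v.

Lemma vrE (K : fieldType) (v : K -> int) (hv : discrete_valuation v) x :
  (x \in vr hv) = vge v 0 x.
Proof. by []. Qed.

Lemma vr_subring (K : fieldType) (v : K -> int) (hv : discrete_valuation v) :
  subring_closed (vr hv).
Proof.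
split; first by rewrite vrE /vge v1 // lexx orbT.
  by move=> x y; rewrite !vrE; apply: vgeB.
by move=> x y; rewrite !vrE => hx hy; have := vgeM hv hx hy; rewrite addr0.
Qed.

HB.instance Definition _ (K : fieldType) (v : K -> int) (hv : discrete_valuation v) :=
  GRing.isSubringClosed.Build K (vr hv) (vr_subring hv).

Definition Rv (K : fieldType) (v : K -> int) (hv : discrete_valuation v) := {x : K | x \in vr hv}.
HB.instance Definition _ (K : fieldType) (v : K -> int) (hv : discrete_valuation v) :=
  [isSub for (@sval K (fun x => x \in vr hv)) : Rv hv -> K].
HB.instance Definition _ (K : fieldType) (v : K -> int) (hv : discrete_valuation v) :=
  [Choice of Rv hv by <:].
HB.instance Definition _ (K : fieldType) (v : K -> int) (hv : discrete_valuation v) :=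
  [SubChoice_isSubComNzRing of Rv hv by <:].

Section Int.
Variables (K : fieldType) (v : K -> int) (hv : discrete_valuation v) (L : fieldExtType K).

Definition iv (y : L) := integralOver (in_alg L \o val : Rv hv -> L) y.

Lemma iv_equiv y : integral_over_vring v y <-> iv y.
Proof.
split.
  case=> p [mp Rp ry].
  pose q : {poly Rv hv} := map_poly (insubd (0 : Rv hv)) p.
  have qp : map_poly val q = p.
    rewrite /q -map_poly_comp map_poly_id // => x px /=.
    by rewrite insubdK //; exact: (allP Rp x px).
  exists q; last by rewrite map_poly_comp qp.
  have := mp; rewrite -qp !monicE lead_coef_map_inj; last 2 first.
  - exact: val_inj.
  - by [].
  by move/eqP => h; apply/eqP; apply: val_inj.
case=> q mq rq; exists (map_poly val q); split.
- exact: monic_map.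
- by apply/allP => x /(nthP 0) [i _ <-]; rewrite coef_map /=; exact: valP.
- by rewrite -map_poly_comp.
Qed.

Lemma ivK (r : K) : iv (in_alg L r) -> r \in vr hv.
Proof.
case/iv_equiv => p [mp Rp].
rewrite fmorph_root => /rootP.
rewrite horner_coef.
have sp : (0 < size p)%N by rewrite size_poly_gt0 monic_neq0.
rewrite -(prednK sp) big_ord_recr /=.
have -> : p`_(size p).-1 = 1 by move/monicP: mp.
rewrite mul1r => /eqP; rewrite addrC addr_eq0 => /eqP.
set N := (size p).-1 => hN.
rewrite vrE /vge; have [//|r0] := eqVneq r 0.
rewrite /=; case: (lerP 0 (v r)) => // vr0.
have hs : vge v ((N%:Z - 1) * v r) (\sum_(i < N) p`_i * r ^+ i).
  apply: (vge_sum hv) => i _.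
  have Rp' : p \is a polyOver (vr hv) := Rp.
  have h1 : vge v 0 p`_i by rewrite -vrE; exact: (polyOverP Rp').
  have h2 : vge v (i%:Z * v r) (r ^+ i) by rewrite /vge vX // lexx orbT.
  apply: vge_le (vgeM hv h1 h2).
  have hi : (i < N)%N := ltn_ord i.
  rewrite add0r; nia.
have : vge v ((N%:Z - 1) * v r) (r ^+ N) by rewrite hN vgeN.
rewrite /vge expf_eq0 (negPf r0) andbF /= vX //.
nia.
Qed.

Lemma iv_K (r : K) : r \in vr hv -> iv (in_alg L r).
Proof.
move=> hr; have := integral_id (in_alg L \o val : {rmorphism Rv hv -> L}) (insubd (0 : Rv hv) r).
by rewrite /= insubdK.
Qed.

Lemma iv_add x y : iv x -> iv y -> iv (x + y).
Proof. exact: integral_add. Qed.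
Lemma iv_sub x y : iv x -> iv y -> iv (x - y).
Proof. exact: integral_sub. Qed.
Lemma iv_mul x y : iv x -> iv y -> iv (x * y).
Proof. exact: integral_mul. Qed.
Lemma iv_exp x k : iv x -> iv (x ^+ k).
Proof.
move=> hx; elim: k => [|k IH]; first by rewrite expr0; exact: integral1.
by rewrite exprS; apply: iv_mul.
Qed.

Lemma iv_horner (g : {poly K}) (th : L) :
  g \is a polyOver (vr hv) -> iv th -> iv (map_poly (in_alg L) g).[th].
Proof.
move=> Rg ith; apply: integral_horner => //.
apply/integral_poly => i; rewrite coef_map /=; apply: iv_K.
exact: (polyOverP Rg).
Qed.
End Int.

Section Main.
Variables (K : fieldType) (v : K -> int) (hv : discrete_valuation v) (L : fieldExtType K).
Variables (pi c : K) (n : nat) (th : L).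
Hypotheses (pi0 : pi != 0) (vpi : v pi = 1) (c0 : c != 0) (vc : v c = 1) (n0 : (0 < n)%N)
  (thn : th ^+ n = in_alg L c).

Lemma pi_vr : pi \in vr hv.
Proof. by rewrite vrE /vge vpi orbT. Qed.

Lemma bound (q : {poly K}) : exists e : nat, pi ^+ e *: q \is a polyOver (vr hv).
Proof.
exists (\max_(i < size q) `|v q`_i|)%N.
apply/polyOverP => i; rewrite coefZ vrE.
have [hi|hi] := ltnP i (size q); last first.
  by rewrite nth_default // mulr0; apply: vge0.
have [->|qi0] := eqVneq q`_i 0; first by rewrite mulr0; apply: vge0.
rewrite /vge mulf_eq0 expf_eq0 (negPf pi0) (negPf qi0) andbF /=.
rewrite vM ?expf_neq0 // vX // vpi mulr1.
have := @leq_bigmax _ (fun i : 'I_(size q) => `|v q`_i|%N) (Ordinal hi).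
rewrite /=; lia.
Qed.

Lemma th_iv : iv hv th.
Proof.
apply/iv_equiv; exists ('X^n - c%:P); split.
- exact: monicXnsubC.
- have : 'X^n - c%:P \is a polyOver (vr hv).
    by rewrite rpredB ?polyOverXn ?polyOverC // vrE /vge vc orbT.
  by [].
- by rewrite /root rmorphB /= map_polyXn map_polyC /= !hornerE thn subrr.
Qed.


Lemma main (q : {poly K}) : (size q <= n)%N ->
  iv hv (map_poly (in_alg L) q).[th] -> q \is a polyOver (vr hv).
Proof.
move=> sq iq.
have [e he emin] := ex_minnP (bound q).
case: e he emin => [|e] he emin; first by rewrite expr0 scale1r in he.
exfalso.
set d := pi ^+ e.+1 *: q in he.
have hd : d = pi ^+ e.+1 *: q by [].
clearbody d.
have sd : (size d <= n)%N by rewrite hd; apply: leq_trans (size_scale_leq _ _) sq.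
have dR i : vge v 0 d`_i by rewrite -vrE; exact: (polyOverP he).
case: (boolP [forall j : 'I_(size d), vge v 1 d`_j]) => [/forallP allM | ].
  have : pi ^+ e *: q \is a polyOver (vr hv).
    apply/polyOverP => i; rewrite vrE.
    have -> : (pi ^+ e *: q)`_i = pi^-1 * d`_i.
      by rewrite hd !coefZ exprS -mulrA mulKf.
    have hM : vge v 1 d`_i.
      have [hi|hi] := ltnP i (size d); first exact: (allM (Ordinal hi)).
      by rewrite nth_default //; apply: vge0.
    have hpi : vge v (-1) pi^-1 by rewrite /vge vV // vpi lexx orbT.
    by have := vgeM hv hpi hM; rewrite addNr.
  by move/emin; rewrite ltnn.
rewrite negb_forall => /existsP [j0 hj0].
have exj : exists j, ~~ vge v 1 d`_j by exists j0.
have [j hj jmin] := ex_minnP exj.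
have dj0 : d`_j != 0 by apply: contraNneq hj => ->; apply: vge0.
have vdj : v d`_j = 0.
  move: hj (dR j); rewrite /vge (negPf dj0) /= => h1 h2; lia.
have jn : (j < n)%N.
  apply: leq_trans sd; rewrite ltnNge; apply: contra hj => h.
  by rewrite nth_default //; apply: vge0.
have lowM i : (i < j)%N -> vge v 1 d`_i.
  move=> ij; apply/negPn/negP => h; have := jmin i h; rewrite leqNgt ij //.
pose dlo := \poly_(i < j) (d`_i / pi).
pose d1 := \poly_(i < n) d`_(i + j).
pose d2 := \poly_(i < n) d`_(i + j).+1.
have F1 : d = pi *: dlo + 'X^j * d1.
  apply/polyP => i; rewrite coefD coefZ coefXnM !coef_poly.
  case: (ltnP i j) => ij.
    by rewrite addr0 mulrC -mulrA mulVf ?mulr1.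
  rewrite mulr0 add0r subnK //.
  case: ltnP => // h; rewrite nth_default //.
  apply: leq_trans sd _; rewrite -(subnK ij); lia.
have F2 : d1 = (d`_j)%:P + 'X * d2.
  apply/polyP => i; rewrite coefD coefC coefXM !coef_poly.
  case: i => [|i] /=; first by rewrite n0 add0n addr0.
  rewrite add0r addSn.
  case: (ltnP i.+1 n) => h1; first by rewrite (ltnW h1).
  case: ltnP => // h2; rewrite nth_default //.
  apply: leq_trans sd _; lia.
have dloR : dlo \is a polyOver (vr hv).
  apply/polyOverP => i; rewrite coef_poly vrE.
  case: ltnP => ij; last by apply: vge0.
  have hpi : vge v (-1) pi^-1 by rewrite /vge vV // vpi lexx orbT.
  by have := vgeM hv (lowM i ij) hpi; rewrite addrN.
have d2R : d2 \is a polyOver (vr hv).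
  apply/polyOverP => i; rewrite coef_poly vrE.
  by case: ltnP => _; [apply: dR | apply: vge0].
pose ev (g : {poly K}) := (map_poly (in_alg L) g).[th].
set P := in_alg L pi; set D := in_alg L d`_j; set C := in_alg L c.
have P0 : P != 0 by rewrite fmorph_eq0.
have Ed : ev d = P ^+ e.+1 * ev q.
  by rewrite /ev hd map_polyZ hornerZ rmorphXn.
have E1 : ev d = P * ev dlo + th ^+ j * ev d1.
  by rewrite /ev {1}F1 rmorphD /= map_polyZ rmorphM /= map_polyXn hornerD hornerZ hornerM hornerXn.
have E2 : ev d1 = D + th * ev d2.
  by rewrite /ev {1}F2 rmorphD /= map_polyC rmorphM /= map_polyX hornerD hornerC hornerM hornerX.
have iz : iv hv (P ^+ e * ev q).
  apply: iv_mul => //; rewrite -rmorphXn; apply: iv_K; exact: rpredX pi_vr.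
have iw : iv hv (P^-1 * th ^+ j * ev d1).
  have -> : P^-1 * th ^+ j * ev d1 = P ^+ e * ev q - ev dlo.
    have h : th ^+ j * ev d1 = P * (P ^+ e * ev q - ev dlo).
      by rewrite mulrBr mulrA -exprS -Ed E1 addrAC subrr add0r.
    by rewrite -mulrA h mulKf.
  by apply: iv_sub => //; apply: iv_horner dloR th_iv.
have cpR : c / pi \in vr hv.
  rewrite vrE /vge mulf_eq0 invr_eq0 (negPf c0) (negPf pi0) /= vM ?invr_eq0 //.
  by rewrite vV // vc vpi addrN.
have ix : iv hv (D * P^-1 * th ^+ n.-1).
  have e1 : th ^+ j * th ^+ (n.-1 - j) = th ^+ n.-1.
    by rewrite -exprD subnKC // -ltnS prednK.
  have e2 : th * th ^+ n.-1 = C by rewrite -exprS prednK // thn.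
  have -> : D * P^-1 * th ^+ n.-1 =
      P^-1 * th ^+ j * ev d1 * th ^+ (n.-1 - j) - in_alg L (c / pi) * ev d2.
    have -> : in_alg L (c / pi) = C * P^-1 by rewrite rmorphM fmorphV.
    rewrite E2 -e2 -e1; ring.
  apply: iv_sub; first by apply: iv_mul => //; apply: iv_exp; apply: th_iv.
  by apply: iv_mul; [apply: iv_K | apply: iv_horner d2R th_iv].
have := iv_exp n ix.
have -> : (D * P^-1 * th ^+ n.-1) ^+ n = in_alg L ((d`_j / pi) ^+ n * c ^+ n.-1).
  rewrite !exprMn -exprM mulnC exprM thn.
  by rewrite !(rmorphM, rmorphXn, fmorphV).
move/ivK; rewrite vrE /vge mulf_eq0 !expf_eq0 mulf_eq0 invr_eq0 (negPf dj0) (negPf pi0) (negPf c0) !andbF /=.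
have hA : (d`_j / pi) ^+ n != 0 by rewrite expf_neq0 // mulf_neq0 ?invr_eq0.
have hB : c ^+ n.-1 != 0 by rewrite expf_neq0.
rewrite (vM hv hA hB) (vX hv _ (mulf_neq0 dj0 (invr_neq0 pi0))) (vX hv _ c0).
rewrite (vM hv dj0 (invr_neq0 pi0)) (vV hv pi0) vdj vpi vc.
have : (0 < n)%N := n0. lia.
Qed.


Lemma indep (q : {poly K}) : (size q <= n)%N ->
  (map_poly (in_alg L) q).[th] = 0 -> q = 0.
Proof.
move=> sq q0; apply/polyP => i; rewrite coef0.
apply/eqP/negP => /negP qi0.
pose k : int := v q`_i + 1.
have pk0 : pi ^ (- k) != 0 by rewrite expfz_neq0.
have := main (q := pi ^ (- k) *: q).
rewrite size_scale // map_polyZ hornerZ q0 mulr0 => /(_ sq).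
have i0 : iv hv (0 : L) by rewrite -(rmorph0 (in_alg L)); apply: iv_K; rewrite rpred0.
move=> /(_ i0) /polyOverP /(_ i); rewrite coefZ vrE /vge mulf_eq0 (negPf pk0) (negPf qi0) /=.
rewrite (vM hv pk0 qi0) (vXz hv _ pi0) vpi /k; lia.
Qed.

End Main.

Unset Implicit Arguments.
Theorem corollary3p3 (K : fieldType) (v : K -> int) (L : fieldExtType K)
    (pi a : K) (n : nat) (m : nat) (alpha : L) (s t : int) :
  discrete_valuation v ->
  pi != 0 -> v pi = 1 ->
  a != 0 -> v a = m%:Z -> (1 <= m)%N -> coprime m n ->
  root (map_poly (in_alg L) ('X^n + a%:P)) alpha ->
  m%:Z * s - n%:Z * t = 1 ->
  let theta := alpha ^ s / (in_alg L pi) ^ t in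
  irreducible_poly ('X^n + a%:P : {poly K}) /\
  (forall y : L,
     (y \in <<1; alpha>>%VS /\ integral_over_vring v y) <->
     in_vring_adjoin v theta y).
Proof.
move=> hv pi0 vpi a0 va m1 cop ra hst theta.
have ra' : alpha ^+ n = - in_alg L a.
  move/rootP: ra; rewrite rmorphD /= map_polyXn map_polyC /= hornerD hornerXn hornerC.
  by move/eqP; rewrite addr_eq0 => /eqP.
have n0 : (0 < n)%N.
  case: n cop ra' {ra hst theta} => // cop ra'.
  exfalso; move: cop; rewrite /coprime gcdn0 => /eqP m1'.
  move: ra'; rewrite expr0 => h.
  have : in_alg L (1 + a) = 0 by rewrite rmorphD rmorph1 h addNr.
  move/eqP; rewrite fmorph_eq0 addr_eq0 => /eqP ha.
  by move: va; rewrite -(opprK a) -ha (vN hv) (v1 hv) m1'.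
set P := in_alg L pi.
have P0 : P != 0 by rewrite fmorph_eq0.
have al0 : alpha != 0.
  apply/eqP => al0; move: ra'; rewrite al0 expr0n gtn_eqF // => /eqP.
  by rewrite eq_sym oppr_eq0 fmorph_eq0 (negPf a0).
pose c := (-a) ^ s / pi ^ (t * n%:Z).
have na0 : - a != 0 by rewrite oppr_eq0.
have c0 : c != 0 by rewrite mulf_neq0 ?invr_eq0 ?expfz_neq0.
have vc : v c = 1.
  rewrite (vM hv) ?invr_eq0 ?expfz_neq0 // (vV hv) ?expfz_neq0 //.
  by rewrite !(vXz hv) // (vN hv) va vpi mulr1 [s * _]mulrC [t * _]mulrC.
have thn : theta ^+ n = in_alg L c.
  have h1 : (alpha ^ s) ^+ n = in_alg L ((-a) ^ s).
    by rewrite exprnP exprz_exp mulrC -exprz_exp -exprnP ra' -rmorphN fmorphXz.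
  have h2 : (P ^ t) ^+ n = in_alg L (pi ^ (t * n%:Z)).
    by rewrite exprnP exprz_exp fmorphXz.
  by rewrite /theta exprMn exprVn h1 h2 -fmorphV -rmorphM.
have th_in : theta \in <<1; alpha>>%VS.
  by rewrite /theta rpred_div ?rpredXz ?memv_adjoin // /P rpredZ // rpred1.
have sub : (<<1; theta>> <= <<1; alpha>>)%VS.
  by apply/FadjoinP; split; [apply: sub1v | exact: th_in].
have dth : (n <= \dim <<1; theta>>)%N.
  rewrite dim_Fadjoin dimv1 muln1 leqNgt; apply/negP => h.
  have /polyOver1P [q hq] := minPolyOver 1 theta.
  have sq : (size q <= n)%N.
    by rewrite -(size_map_poly (in_alg L)) -hq size_minPoly.
  have := root_minPoly 1 theta; rewrite hq => /rootP.
  move/(indep hv pi0 vpi c0 vc n0 thn sq) => q0.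
  by move: (monic_minPoly 1 theta); rewrite hq q0 rmorph0 monicE lead_coef0 eq_sym oner_eq0.
set f : {poly K} := 'X^n + a%:P.
have sf : size f = n.+1 by rewrite size_XnaddC.
have f0 : f != 0 by rewrite -size_poly_gt0 sf.
have minA : size (minPoly 1 alpha) = (\dim <<1; alpha>>).+1.
  by rewrite size_minPoly dim_Fadjoin dimv1 muln1.
have dal : (\dim <<1; alpha>> <= n)%N.
  have : (size (minPoly 1 alpha) <= size (map_poly (in_alg L) f))%N.
    apply: dvdp_leq; first by rewrite map_poly_eq0.
    by apply: minPoly_dvdp => //; apply/polyOver1P; exists f.
  by rewrite minA size_map_poly sf.
have Eeq : <<1; theta>>%VS = <<1; alpha>>%VS.
  by apply/eqP; rewrite eqEdim sub (leq_trans dal dth).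
have dimA : \dim <<1; alpha>> = n by apply/eqP; rewrite eqn_leq dal -Eeq dth.
have nosmall (r : {poly K}) : r != 0 -> (size r <= n)%N ->
    ~~ root (map_poly (in_alg L) r) alpha.
  move=> r0 sr; apply/negP => rr.
  have : (size (minPoly 1 alpha) <= size (map_poly (in_alg L) r))%N.
    apply: dvdp_leq; first by rewrite map_poly_eq0.
    by apply: minPoly_dvdp => //; apply/polyOver1P; exists r.
  by rewrite minA dimA size_map_poly ltnNge sr.
split.
  split; first by rewrite sf ltnS.
  move=> q sq qf.
  have q0 : q != 0 by apply: contraNneq f0 => q0; move: qf; rewrite q0 dvd0p.
  pose h := f %/ q.
  have hf : f = h * q by rewrite divpK.
  have h0 : h != 0 by apply: contraNneq f0 => h0; rewrite hf h0 mul0r.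
  rewrite -dvdp_size_eqp //.
  have [sh|sh] := eqVneq (size h) 1%N.
    by rewrite hf size_mul // sh.
  exfalso.
  have sq2 : (1 < size q)%N.
    by move: sq q0; rewrite -size_poly_gt0; case: (size q) => [|[|k]].
  have sh2 : (1 < size h)%N.
    by move: sh h0; rewrite -size_poly_gt0; case: (size h) => [|[|k]].
  have sz : n.+1 = (size h + size q).-1 by rewrite -sf hf size_mul.
  have sz' : (size h + size q)%N = n.+2.
    by move: sz; case: (size h + size q)%N => //= k ->.
  have : root (map_poly (in_alg L) h) alpha || root (map_poly (in_alg L) q) alpha.
    by rewrite -rootM -rmorphM /= -hf.
  case/orP => rr.
    by move: rr; apply/negP; apply: nosmall => //; have := leq_add (leqnn (size h)) sq2; rewrite sz' addn2 !ltnS.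
  by move: rr; apply/negP; apply: nosmall => //; have := leq_add sh2 (leqnn (size q)); rewrite sz' add2n !ltnS.
move=> y; split.
  case=> yA /(iv_equiv hv) iy.
  rewrite -Eeq in yA.
  case/Fadjoin_polyP: yA => p /polyOver1P [q ->] yq.
  pose fth : {poly K} := 'X^n - c%:P.
  have fth0 : fth != 0 by rewrite -size_poly_gt0 size_XnsubC.
  have ev0 : (map_poly (in_alg L) fth).[theta] = 0.
    by rewrite rmorphB /= map_polyXn map_polyC /= hornerD hornerN hornerXn hornerC thn subrr.
  have yr : y = (map_poly (in_alg L) (q %% fth)).[theta].
    by rewrite yq {1}(divp_eq q fth) rmorphD rmorphM /= hornerD hornerM ev0 mulr0 add0r.
  exists (q %% fth); split => //.
  have : (size (q %% fth)%R <= n)%N.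
    by rewrite -ltnS -(size_XnsubC c n0) ltn_modp.
  move/(main pi0 vpi c0 vc n0 thn); rewrite -yr => /(_ hv iy).
  by [].
case=> g [Rg ->]; split.
  rewrite -Eeq; apply: mempx_Fadjoin; apply/polyOver1P; by exists g.
apply/(iv_equiv hv); apply: iv_horner; first exact: Rg.
exact: th_iv vc n0 thn.
Qed.
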